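(* If $f:D^n\to\mathbb R$ is $\alpha$-bisubmodular, then its Lovász extension coincides with its convex closure: $f^L(\mathbf x)=f^-(\mathbf x)$ for all $\mathbf x\in[-\alpha,1]^n$, where $f^-(\mathbf x)=\min\{\sum_{\mathbf a\in D^n}\lambda(\mathbf a)f(\mathbf a):\lambda\in\mathcal P(\mathbf x)\}$.
   Context: Fix $\alpha\in(0,1]$ and $D=\{-\alpha,0,1\}\subset\mathbb R$. Define the partial order $\preceq$ on $D$ by $0\preceq 1$, $0\preceq -\alpha$ (plus reflexivity), with $1$ and $-\alpha$ incomparable; extend it componentwise to $D^n$. Define $\wedge_0$ on $D$ by $1\wedge_0(-\alpha)=(-\alpha)\wedge_0 1=0$ and $x\wedge_0 y=\min(x,y)$ w.r.t. $\preceq$ if $\{x,y\}\ne\{-\alpha,1\}$; for $a\in D$ define $\vee_a$ by $1\vee_a(-\alpha)=(-\alpha)\vee_a 1=a$ and $x\vee_a y=\max(x,y)$ w.r.t. $\preceq$ if $\{x,y\}\ne\{-\alpha,1\}$; extend componentwise to $D^n$. $f:D^n\to\mathbb R$ is $\alpha$-bisubmodular if for all $\mathbf a,\mathbf b\in D^n$: $f(\mathbf a\wedge_0\mathbf b)+\alpha f(\mathbf a\vee_0\mathbf b)+(1-\alpha)f(\mathbf a\vee_1\mathbf b)\le f(\mathbf a)+f(\mathbf b)$. For $\mathbf x\in[-\alpha,1]^n$, $\mathcal P(\mathbf x)$ is the set of $\lambda:D^n\to[0,1]$ with $\sum_{\mathbf a}\lambda(\mathbf a)=1$ and $\sum_{\mathbf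 a}\lambda(\mathbf a)\mathbf a=\mathbf x$. For each $\mathbf x$ there is a unique $\lambda_{\mathbf x}\in\mathcal P(\mathbf x)$ whose support is a chain w.r.t. $\preceq$; the Lovász extension is $f^L(\mathbf x)=\sum_{\mathbf a\in D^n}\lambda_{\mathbf x}(\mathbf a)f(\mathbf a)$. *)

(* Defs.v *)
From HB Require Import structures.
From mathcomp Require Import all_boot all_order all_algebra.
From Stdlib Require Import ClassicalEpsilon.
Set Implicit Arguments. Unset Strict Implicit. Unset Printing Implicit Defensive.
Import Order.TTheory GRing.Theory Num.Theory.
Local Open Scope ring_scope.

(* The three-element domain D = {-alpha, 0, 1}: Dm ~ -alpha, D0 ~ 0, D1 ~ 1. *)
Inductive D3 := Dm | D0 | D1.

Definition D3_to (d : D3) : 'I_3 :=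
  match d with Dm => @Ordinal 3 0 isT | D0 => @Ordinal 3 1 isT | D1 => @Ordinal 3 2 isT end.
Definition D3_of (i : 'I_3) : D3 :=
  match val i with 0%N => Dm | 1%N => D0 | _ => D1 end.
Lemma D3_toK : cancel D3_to D3_of. Proof. by case. Qed.
HB.instance Definition _ := Finite.copy D3 (can_type D3_toK).

Definition valD (R : realFieldType) (alpha : R) (d : D3) : R :=
  match d with Dm => - alpha | D0 => 0 | D1 => 1 end.

Definition leD (x y : D3) : bool := (x == D0) || (x == y).

Definition meetD (x y : D3) : D3 :=
  if leD x y then x else if leD y x then y else D0.
Definition joinD (a x y : D3) : D3 :=
  if leD x y then y else if leD y x then x else a.

Definition Dn (n : nat) := {ffun 'I_n -> D3}.

Definition leDn n (a b : Dn n) : bool := [forall i, leD (a i) (b i)].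
Definition meetDn n (a b : Dn n) : Dn n := [ffun i => meetD (a i) (b i)].
Definition joinDn n (c : D3) (a b : Dn n) : Dn n := [ffun i => joinD c (a i) (b i)].

Definition bisubmodular (R : realFieldType) (alpha : R) n (f : Dn n -> R) : Prop :=
  forall a b : Dn n,
    f (meetDn a b) + alpha * f (joinDn D0 a b) + (1 - alpha) * f (joinDn D1 a b)
    <= f a + f b.

Definition inP (R : realFieldType) (alpha : R) n (x : 'I_n -> R) (lam : Dn n -> R) : Prop :=
  [/\ forall a, 0 <= lam a <= 1,
      \sum_(a : Dn n) lam a = 1 &
      forall i, \sum_(a : Dn n) lam a * valD alpha (a i) = x i].

Definition chain_support (R : realFieldType) n (lam : Dn n -> R) : Prop :=
  forall a b : Dn n, lam a != 0 -> lam b != 0 -> leDn a b || leDn b a.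

(* lambda_x : the (unique, by the paper) element of P(x) with chain support *)
Definition lambda_x (R : realFieldType) (alpha : R) n (x : 'I_n -> R) : Dn n -> R :=
  epsilon (inhabits (fun _ => 0))
    (fun lam => inP alpha x lam /\ chain_support lam).

Definition lovasz (R : realFieldType) (alpha : R) n (f : Dn n -> R) (x : 'I_n -> R) : R :=
  \sum_(a : Dn n) lambda_x alpha x a * f a.

Definition is_convex_closure_value (R : realFieldType) (alpha : R) n
    (f : Dn n -> R) (x : 'I_n -> R) (v : R) : Prop :=
  (exists lam, inP alpha x lam /\ \sum_(a : Dn n) lam a * f a = v) /\
  (forall lam, inP alpha x lam -> v <= \sum_(a : Dn n) lam a * f a).

(* Main.v *)
Require Import Defs.
From mathcomp Require Import all_boot all_order all_algebra.
From mathcomp Require Import ring lra.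
From Stdlib Require Import ClassicalEpsilon.
Import Order.TTheory GRing.Theory Num.Theory.
Local Open Scope ring_scope.

Lemma val_bisub (R : realFieldType) (alpha : R) x y :
  valD alpha (meetD x y) + alpha * valD alpha (joinD D0 x y) + (1 - alpha) * valD alpha (joinD D1 x y)
  = valD alpha x + valD alpha y.
Proof. by case: x; case: y; rewrite /= ?mulr0 ?mulr1 ?addr0 ?add0r; ring. Qed.

Lemma meetDx0 x : meetD x D0 = D0. Proof. by case: x. Qed.
Lemma meetD0x x : meetD D0 x = D0. Proof. by case: x. Qed.
Lemma meetDxx x : meetD x x = x. Proof. by case: x. Qed.
Lemma joinDx0 d x : joinD d x D0 = x. Proof. by case: x. Qed.
Lemma joinD0x d x : joinD d D0 x = x. Proof. by case: x. Qed.
Lemma joinDxx d x : joinD d x x = x. Proof. by case: x. Qed.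
Lemma meetD_cons x y : y != D0 -> meetD x y = D0 \/ meetD x y = y.
Proof. by case: x; case: y; auto. Qed.
Lemma joinD0_cons x y : y != D0 -> joinD D0 x y = D0 \/ joinD D0 x y = y.
Proof. by case: x; case: y; auto. Qed.
Lemma joinD1_idem x y : y != D0 -> joinD D1 (joinD D1 x y) y = joinD D1 x y.
Proof. by case: x; case: y. Qed.

Section Greedy.
Variables (R : realFieldType) (alpha : R) (n : nat).
Hypotheses (a0 : 0 < alpha) (a1 : alpha <= 1).
Variables (s : 'I_n -> D3) (rk : 'I_n -> nat) (h : Dn n -> R).
Hypotheses (s_nz : forall i, s i != D0) (rk_inj : injective rk)
  (rk_lt : forall i, (rk i < n)%N) (hbis : bisubmodular alpha h).

Definition cc (k : nat) : Dn n := [ffun i => if (rk i < k)%N then s i else D0].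
Hypothesis hc : forall k, (k <= n)%N -> h (cc k) = 0.

Definition cons_s (a : Dn n) := forall i, a i = D0 \/ a i = s i.

Lemma cons_ge0_aux k : (k <= n)%N -> forall a, cons_s a ->
  (forall i, a i != D0 -> (rk i < k)%N) -> 0 <= h a.
Proof.
elim: k => [|k IH] kn a ca nza.
  have -> : a = cc 0.
    apply/ffunP => i; rewrite ffunE /=.
    by case: (a i =P D0) => // /eqP /nza.
  by rewrite hc.
have kn' : (k <= n)%N by apply: ltnW.
case: (pickP (fun j => (a j != D0) && (rk j == k))) => [j /andP [aj /eqP rj]|none].
- have bis := hbis a (cc k).
  set a' := meetDn a (cc k) in bis.
  have ej : forall d, joinDn d a (cc k) = cc k.+1.
    move=> d; apply/ffunP => i; rewrite !ffunE.
    case: ltnP => ik.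
      rewrite (leq_trans ik (leqnSn k)).
      by case: (ca i) => ->; rewrite ?joinD0x ?joinDxx.
    rewrite joinDx0 ltnS.
    case: (ltngtP (rk i) k); first by rewrite ltnNge ik.
      move=> ki; case: (a i =P D0) => // /eqP /nza; rewrite ltnS leqNgt ki //.
    move=> rik; have -> : i = j by apply: rk_inj; rewrite rik rj.
    by case: (ca j) => // e; move: aj; rewrite e eqxx.
  rewrite !ej (hc _ kn') (hc _ kn) in bis.
  have ha' : 0 <= h a'.
    apply: (IH kn').
      move=> i; rewrite !ffunE; case: ifP => _; last by rewrite meetDx0; left.
      by case: (ca i) => ->; rewrite ?meetD0x ?meetDxx; auto.
    move=> i; rewrite !ffunE; case: ifP => // _; by rewrite meetDx0 eqxx.
  lra.
- apply: (IH kn') => // i ai.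
  have := none i; rewrite ai /= => /negbT rik.
  by have := nza i ai; rewrite ltnS leq_eqVlt (negbTE rik).
Qed.

Lemma cons_ge0 a : cons_s a -> 0 <= h a.
Proof. move=> ca; apply: (cons_ge0_aux n (leqnn n) a ca) => i _; exact: rk_lt. Qed.

Lemma ccn : cc n = [ffun i => s i].
Proof. by apply/ffunP => i; rewrite !ffunE rk_lt. Qed.

Lemma meet_cons a : cons_s (meetDn a (cc n)).
Proof. move=> i; rewrite ccn !ffunE; exact: meetD_cons. Qed.
Lemma join0_cons a : cons_s (joinDn D0 a (cc n)).
Proof. move=> i; rewrite ccn !ffunE; exact: joinD0_cons. Qed.

Lemma all_ge0 a : 0 <= h a.
Proof.
have hn := hc _ (leqnn n).
have H1 : forall b, joinDn D1 b (cc n) = b -> 0 <= h b.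
  move=> b eb; have bis := hbis b (cc n); rewrite eb hn in bis.
  have := cons_ge0 _ (meet_cons b); have := cons_ge0 _ (join0_cons b).
  move=> p q.
  have X := mulr_ge0 (ltW a0) p.
  have : 0 <= alpha * h b by lra.
  by rewrite pmulr_rge0.
have bis := hbis a (cc n); rewrite hn in bis.
have := cons_ge0 _ (meet_cons a); have := cons_ge0 _ (join0_cons a).
have : 0 <= h (joinDn D1 a (cc n)).
  apply: H1; apply/ffunP => i; rewrite ccn !ffunE; exact: joinD1_idem.
move=> p q r.
have X := mulr_ge0 (ltW a0) q.
have Y : 0 <= (1-alpha) * h (joinDn D1 a (cc n))  by apply: mulr_ge0; [rewrite subr_ge0 | exact: p].
lra.
Qed.
End Greedy.
Section Rank.
Variables (R : realFieldType) (n : nat) (t : 'I_n -> R).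
Definition before (i j : 'I_n) : bool := (t j < t i) || ((t i == t j) && (i < j)%N).
Definition rk (j : 'I_n) : nat := #|[pred i | before i j]|.

Lemma before_irr i : ~~ before i i.
Proof. by rewrite /before ltxx ltnn andbF. Qed.

Lemma before_trans i j k : before i j -> before j k -> before i k.
Proof.
rewrite /before => /orP [h1|/andP [/eqP e1 h1]] /orP [h2|/andP [/eqP e2 h2]].
- by rewrite (lt_trans h2 h1).
- by rewrite -e2 h1.
- by rewrite e1 h2.
- by rewrite e1 e2 eqxx (ltn_trans h1 h2) orbT.
Qed.

Lemma before_total i j : i != j -> before i j || before j i.
Proof.
move=> ij; rewrite /before.
case: (ltgtP (t i) (t j)) => //= _.
by case: (ltngtP i j) => // /val_inj eij; rewrite eij eqxx in ij.
Qed.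

Lemma rk_before i j : before i j -> (rk i < rk j)%N.
Proof.
move=> bij; apply: proper_card; apply/properP; split.
  apply/subsetP => l; rewrite !inE => bli; exact: before_trans bli bij.
by exists i; rewrite !inE // before_irr.
Qed.

Lemma rk_lt j : (rk j < n)%N.
Proof.
have : (rk j <= #|predC1 j|)%N.
  apply: subset_leq_card; apply/subsetP => l; rewrite !inE.
  by apply: contraTneq => ->; rewrite before_irr.
rewrite cardC1 card_ord => H; apply: (leq_ltn_trans H).
by case: n j {H} => [[]|m] //.
Qed.

Lemma rk_inj : injective rk.
Proof.
move=> i j e; apply/eqP; apply/negPn/negP => /before_total /orP [] /rk_before;
  by rewrite e ltnn.
Qed.

Lemma rk_lt_le i j : (rk i < rk j)%N -> t j <= t i.
Proof.
move=> h; rewrite leNgt; apply/negP => tij.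
have : before j i by rewrite /before tij.
by move/rk_before; rewrite ltnNge (ltnW h).
Qed.

Lemma t_lt_rk i j : t j < t i -> (rk i < rk j)%N.
Proof. by move=> h; apply: rk_before; rewrite /before h. Qed.
End Rank.
Arguments before {R n} t i j.
Arguments rk {R n} t j.
Arguments rk_inj {R n t} [x1 x2].
Arguments rk_lt {R n} t j.
Arguments rk_lt_le {R n t i j}.
Arguments t_lt_rk {R n t i j}.
Arguments cc {n} s rk k.

Lemma sum_ind (R : realFieldType) (T : finType) (c : T) (F : T -> R) :
  \sum_(a : T) (a == c)%:R * F a = F c.
Proof.
rewrite (bigD1 c) //= eqxx mul1r big1 ?addr0 // => b /negbTE ->; by rewrite mul0r.
Qed.

Arguments sum_ind {R T} c F.

Section Exist.
Variables (R : realFieldType) (alpha : R) (n : nat) (x : 'I_n -> R).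
Hypotheses (a0 : 0 < alpha) (a1 : alpha <= 1) (hx : forall i, - alpha <= x i <= 1).

Definition sg j : D3 := if 0 <= x j then D1 else Dm.
Definition tt j : R := if 0 <= x j then x j else - x j / alpha.
Definition rkx := rk tt.
Definition ccx k := cc sg rkx k.

Lemma sg_nz j : sg j != D0. Proof. by rewrite /sg; case: ifP. Qed.
Lemma tt_ge0 j : 0 <= tt j.
Proof.
rewrite /tt; case: ifP => // /negbT; rewrite -ltNge => h.
by rewrite divr_ge0 ?(ltW a0) // oppr_ge0 ltW.
Qed.
Lemma tt_le1 j : tt j <= 1.
Proof.
have := hx j; rewrite /tt; case: ifP => _ /andP [h1 h2] //.
by rewrite ler_pdivrMr // mul1r lerNl.
Qed.
Lemma x_tt j : x j = tt j * valD alpha (sg j).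
Proof.
rewrite /tt /sg; case: ifP => _ /=; first by rewrite mulr1.
rewrite mulrN divfK ?opprK //; exact: lt0r_neq0.
Qed.

Definition T r := \big[Order.max/0]_(j | (r <= rkx j)%N) tt j.
Lemma T_ge0 r : 0 <= T r.
Proof.
rewrite /T; elim/big_ind: _ => //; last by move=> i _; exact: tt_ge0.
by move=> u v hu hv; rewrite le_max hu.
Qed.
Lemma T_le1 r : T r <= 1.
Proof. apply/bigmax_leP; split => // j _; exact: tt_le1. Qed.
Lemma T_rk j : T (rkx j) = tt j.
Proof.
apply/eqP; rewrite eq_le; apply/andP; split; last exact: le_bigmax_cond.
apply/bigmax_leP; split; first exact: tt_ge0.
move=> i; rewrite leq_eqVlt => /orP [/eqP e|lt].
  by rewrite (rk_inj e).
exact: rk_lt_le.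
Qed.
Lemma T_mono r : T r.+1 <= T r.
Proof.
apply/bigmax_leP; split; first exact: T_ge0.
move=> i ri; apply: le_bigmax_cond; exact: ltnW.
Qed.
Lemma T_n : T n = 0.
Proof. rewrite /T big_pred0 // => j; by rewrite leqNgt rk_lt. Qed.

Definition U k := if k is k'.+1 then T k' else 1.
Definition w k := U k - U k.+1.
Lemma w_ge0 k : 0 <= w k.
Proof. rewrite /w subr_ge0; case: k => [|k] /=; [exact: T_le1 | exact: T_mono]. Qed.

Lemma sum_w_from r : (r <= n)%N ->
  \sum_(k < n.+1 | (r < k)%N) w k = T r.
Proof.
move=> rn.
rewrite -(big_mkord (fun k => (r < k)%N)) (@big_cat_nat _ _ _ r.+1) ?ltnS //=.
rewrite big_nat_cond big1 ?add0r; last first.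
  by move=> k /andP [/andP [_ kr] rk']; rewrite ltnNge -ltnS kr in rk'.
rewrite big_nat_cond (eq_bigl (fun k => (r.+1 <= k < n.+1)%N && true)); last first.
  by move=> k /=; rewrite andbT andb_idr // => /andP [].
rewrite -big_nat_cond.
rewrite (eq_big_nat _ _ (F2 := fun k => - (U k.+1 - U k))); last first.
  by move=> k _; rewrite /w opprB.
by rewrite sumrN telescope_sumr // opprB /= T_n subr0.
Qed.

Lemma sum_w : \sum_(k < n.+1) w k = 1.
Proof.
rewrite -(big_mkord xpredT).
rewrite (eq_big_nat _ _ (F2 := fun k => - (U k.+1 - U k))); last first.
  by move=> k _; rewrite /w opprB.
by rewrite sumrN telescope_sumr // opprB /= T_n subr0.
Qed.

Definition lam0 (a : Dn n) : R := \sum_(k < n.+1) (a == ccx k)%:R * w k.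

Lemma lam0_ge0 a : 0 <= lam0 a.
Proof. apply: sumr_ge0 => k _; apply: mulr_ge0 => //; exact: w_ge0. Qed.

Lemma lam0_sum : \sum_a lam0 a = 1.
Proof.
rewrite /lam0 exchange_big /= -[RHS]sum_w; apply: eq_bigr => k _.
exact: (sum_ind (ccx k) (fun=> w k)).
Qed.

Lemma lam0_mean j : \sum_a lam0 a * valD alpha (a j) = x j.
Proof.
rewrite /lam0.
rewrite (eq_bigr (fun a => \sum_(k < n.+1) (a == ccx k)%:R * (w k * valD alpha (a j))));
  last by move=> a _; rewrite mulr_suml; apply: eq_bigr => k _; rewrite mulrA.
rewrite exchange_big /=.
rewrite (eq_bigr (fun k : 'I_n.+1 => w k * valD alpha (ccx k j))); last first.
  move=> k _; exact: (sum_ind (ccx k) (fun a => w k * valD alpha (a j))).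
rewrite (eq_bigr (fun k : 'I_n.+1 => (if (rkx j < k)%N then w k else 0) * valD alpha (sg j))); last first.
  by move=> k _; rewrite /ccx /cc ffunE; case: ifP => _ /=; rewrite ?mulr0 ?mul0r.
rewrite -mulr_suml -big_mkcond sum_w_from; last exact: ltnW (rk_lt _ _).
by rewrite T_rk x_tt.
Qed.

Lemma lam0_le1 a : lam0 a <= 1.
Proof.
rewrite -lam0_sum (bigD1 a) //= lerDl; apply: sumr_ge0 => b _; exact: lam0_ge0.
Qed.

Lemma cc_le (k k' : nat) : (k <= k')%N -> leDn (ccx k) (ccx k').
Proof.
move=> kk; apply/forallP => i; rewrite /leD /ccx /cc !ffunE.
case: ifP => h; last by rewrite eqxx.
by rewrite (leq_trans h kk) eqxx orbT.
Qed.

Lemma lam0_supp a : lam0 a != 0 -> exists k, a = ccx k.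
Proof.
case: (pickP (fun k : 'I_n.+1 => a == ccx k)) => [k /eqP ->|none]; first by exists k.
move/eqP => nz; exfalso; apply: nz; rewrite /lam0 big1 // => k _.
by rewrite none mul0r.
Qed.

Lemma lam0_ok : inP alpha x lam0 /\ chain_support lam0.
Proof.
split; first split.
- by move=> a; rewrite lam0_ge0 lam0_le1.
- exact: lam0_sum.
- exact: lam0_mean.
move=> a b /lam0_supp [k ->] /lam0_supp [k' ->].
case: (leqP k k') => h; first by rewrite cc_le.
by rewrite (cc_le _ _ (ltnW h)) orbT.
Qed.

Section Supp.
Variables (lam : Dn n -> R) (hP : inP alpha x lam) (hC : chain_support lam).
Definition PP j := \sum_b lam b * (b j != D0)%:R.

Lemma lam_ge0 b : 0 <= lam b.
Proof. by case: hP => h _ _; case/andP: (h b). Qed.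

Lemma comp_eq b b' j : lam b != 0 -> lam b' != 0 -> b j != D0 -> b' j != D0 -> b j = b' j.
Proof.
move=> l1 l2 h1 h2; case/orP: (hC _ _ l1 l2) => /forallP /(_ j); rewrite /leD.
  by rewrite (negbTE h1) /= => /eqP.
by rewrite (negbTE h2) /= => /eqP.
Qed.

Lemma supp_info j : tt j = PP j /\ (forall b, lam b != 0 -> b j != D0 -> b j = sg j).
Proof.
case: hP => _ _ hm.
case: (pickP (fun b => (lam b != 0) && (b j != D0))) => [b0 /andP [l0 n0]|none].
- have e : forall b, lam b * valD alpha (b j) = lam b * (b j != D0)%:R * valD alpha (b0 j).
    move=> b; case: (lam b =P 0) => [->|/eqP lb]; first by rewrite !mul0r.
    case: (b j =P D0) => [e|/eqP bj]; first by rewrite e /= !(mulr0, mul0r, mulr0n).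
    by rewrite (comp_eq _ _ _ lb l0 bj n0) /= mulr1.
  have xj : x j = PP j * valD alpha (b0 j).
    by rewrite -hm /PP mulr_suml; apply: eq_bigr => b _; rewrite e.
  have Ppos : 0 < PP j.
    have : lam b0 <= PP j.
      rewrite /PP (bigD1 b0) //= n0 mulr1 lerDl; apply: sumr_ge0 => b _.
      by apply: mulr_ge0 => //; exact: lam_ge0.
    apply: lt_le_trans; rewrite lt0r l0; exact: lam_ge0.
  have sgj : sg j = b0 j.
    rewrite /sg xj; move: n0; case: (b0 j) => //= _.
      by rewrite pmulr_rge0 // oppr_ge0 leNgt a0.
    by rewrite mulr1 (ltW Ppos).
  split.
    rewrite /tt xj; move: sgj; rewrite /sg xj; case: ifP; case: (b0 j) => //= _ _.
      by rewrite mulr1.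
    by rewrite mulrN opprK mulfK //; exact: lt0r_neq0.
  move=> b lb bj; rewrite sgj; exact: comp_eq.
- have P0 : PP j = 0.
    rewrite /PP big1 // => b _; have := none b; rewrite /=.
    by case: (lam b =P 0) => [->|_] /=; [rewrite mul0r | move/negbFE/eqP ->; rewrite mulr0].
  have x0 : x j = 0.
    rewrite -hm big1 // => b _; have := none b; rewrite /=.
    by case: (lam b =P 0) => [->|_] /=; [rewrite mul0r | move/negbFE/eqP ->; rewrite mulr0].
  split; first by rewrite P0 /tt x0 lexx.
  by move=> b lb bj; have := none b; rewrite lb bj.
Qed.

Lemma P_strict a i j : lam a != 0 -> a j != D0 -> a i = D0 -> PP i + lam a <= PP j.
Proof.
move=> la aj ai.
rewrite /PP (bigD1 a) //= [X in _ <= X](bigD1 a) //= ai eqxx aj /= mulr0 mulr1 add0r addrC lerD2r.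
apply: ler_sum => b _.
case: (lam b =P 0) => [->|/eqP lb]; first by rewrite !mul0r.
case: (b i =P D0) => [_|/eqP bi]; first by rewrite /= mulr0n mulr0; apply: mulr_ge0 => //; exact: lam_ge0.
case/orP: (hC _ _ la lb) => /forallP H.
  have := H j; rewrite /leD (negbTE aj) /= => /eqP <-; by rewrite aj.
by have := H i; rewrite /leD (negbTE bi) ai (negbTE bi).
Qed.

Lemma supp_cc a : lam a != 0 -> a = ccx (\max_(j | a j != D0) (rkx j).+1).
Proof.
move=> la; apply/ffunP => i; rewrite /ccx /cc ffunE.
case: (a i =P D0) => ai.
  rewrite ai; case: ifP => //; rewrite ltnNge => /negP []; apply/bigmax_leqP.
  move=> j aj; apply: t_lt_rk.
  have := P_strict _ _ _ la aj ai; rewrite -!(proj1 (supp_info _)).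
  have : 0 < lam a by rewrite lt0r la lam_ge0.
  move=> h1 h2; apply: lt_le_trans h2; by rewrite ltrDl.
have aiN : a i != D0 by apply/eqP.
rewrite (@leq_bigmax_cond _ (fun j => a j != D0) (fun j => (rkx j).+1) i aiN).
exact: (proj2 (supp_info i)).
Qed.
End Supp.

Section Main.
Variables (f : Dn n -> R) (fbis : bisubmodular alpha f).

Definition lamx := lambda_x alpha x.
Lemma lamx_ok : inP alpha x lamx /\ chain_support lamx.
Proof.
exact: (epsilon_spec (inhabits (fun _ : Dn n => 0 : R))
  (fun lam => inP alpha x lam /\ chain_support lam) (ex_intro _ lam0 lam0_ok)).
Qed.

Definition DD r := f (ccx r.+1) - f (ccx r).
Definition yy j := DD (rkx j) / valD alpha (sg j).
Definition gg (a : Dn n) := f (ccx 0) + \sum_j yy j * valD alpha (a j).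

Lemma val_sg_nz j : valD alpha (sg j) != 0.
Proof. rewrite /sg; case: ifP => _ /=; [exact: oner_neq0 | by rewrite oppr_eq0 lt0r_neq0]. Qed.

Definition rk' (j : 'I_n) : 'I_n := Ordinal (rk_lt tt j).
Lemma rk'_inj : injective rk'.
Proof. move=> i j /(congr1 val) /= e; exact: rk_inj e. Qed.

Lemma gg_cc k : (k <= n)%N -> gg (ccx k) = f (ccx k).
Proof.
move=> kn; rewrite /gg.
rewrite (eq_bigr (fun j => if (rk' j < k)%N then DD (rk' j) else 0)); last first.
  move=> j _; rewrite /ccx /cc ffunE /=; case: ifP => _ /=; last by rewrite mulr0.
  by rewrite /yy divfK // val_sg_nz.
rewrite -big_mkcond -(reindex_inj rk'_inj (P := fun r : 'I_n => (r < k)%N) (F := fun r : 'I_n => DD r)).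
rewrite -(big_mkord (fun r => (r < k)%N) DD).
have -> : \sum_(0 <= r < n | (r < k)%N) DD r = \sum_(0 <= r < k) DD r.
  by rewrite (@big_nat_widen _ _ _ 0 k n xpredT DD kn).
rewrite telescope_sumr //; by rewrite addrC subrK.
Qed.

Lemma gg_bisub a b :
  gg (meetDn a b) + alpha * gg (joinDn D0 a b) + (1 - alpha) * gg (joinDn D1 a b) = gg a + gg b.
Proof.
have key : \sum_j yy j * valD alpha (meetDn a b j) + alpha * \sum_j yy j * valD alpha (joinDn D0 a b j)
   + (1 - alpha) * \sum_j yy j * valD alpha (joinDn D1 a b j)
   = \sum_j yy j * valD alpha (a j) + \sum_j yy j * valD alpha (b j).
  rewrite !mulr_sumr -!big_split; apply: eq_bigr => j _; rewrite !ffunE.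
  have := val_bisub _ alpha (a j) (b j) => E.
  rewrite /= -[in RHS]mulrDr -E; ring.
rewrite /gg; move: key.
set S1 := \sum_j _ * valD alpha (meetDn a b j).
set S2 := \sum_j _ * valD alpha (joinDn D0 a b j).
set S3 := \sum_j _ * valD alpha (joinDn D1 a b j).
set S4 := \sum_j _ * valD alpha (a j).
set S5 := \sum_j _ * valD alpha (b j).
move=> key; apply/eqP; rewrite -subr_eq0; apply/eqP.
rewrite -[RHS](subrr (S4 + S5)) -{1}key; ring.
Qed.

Lemma sum_gg mu : inP alpha x mu -> \sum_a mu a * gg a = f (ccx 0) + \sum_j yy j * x j.
Proof.
case=> _ hs hm.
rewrite /gg (eq_bigr (fun a => mu a * f (ccx 0) + mu a * \sum_j yy j * valD alpha (a j)));
  last by move=> a _; rewrite mulrDr.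
rewrite big_split /= -mulr_suml hs mul1r; congr (_ + _).
rewrite (eq_bigr (fun a => \sum_j mu a * (yy j * valD alpha (a j)))); last by move=> a _; rewrite mulr_sumr.
rewrite exchange_big /=; apply: eq_bigr => j _; rewrite -hm mulr_sumr.
by apply: eq_bigr => a _; rewrite mulrCA.
Qed.

Lemma hh_ge0 a : gg a <= f a.
Proof.
rewrite -subr_ge0.
apply: (@all_ge0 R alpha n a0 a1 sg rkx (fun a => f a - gg a) sg_nz rk_inj (rk_lt tt)).
- move=> b c /=; have := fbis b c; have := gg_bisub b c; lra.
- by move=> k kn; rewrite gg_cc // subrr.
Qed.

Lemma main_res : is_convex_closure_value alpha f x (lovasz alpha f x).
Proof.
have [hP hC] := lamx_ok.
have E : lovasz alpha f x = \sum_a lamx a * gg a.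
  rewrite /lovasz; apply: eq_bigr => a _.
  case: (lamx a =P 0) => [e|/eqP la]; first by rewrite -/lamx e !mul0r.
  rewrite (supp_cc _ hP hC _ la) gg_cc //; apply/bigmax_leqP => j _; exact: rk_lt.
split; first by exists lamx; split.
move=> mu hmu; rewrite E (sum_gg _ hP) -(sum_gg _ hmu).
apply: ler_sum => a _; apply: ler_wpM2l; last exact: hh_ge0.
by case: hmu => h _ _; case/andP: (h a).
Qed.
End Main.
End Exist.

Theorem mainTheorem5 (R : realFieldType) (alpha : R) (n : nat) (f : Dn n -> R) :
  0 < alpha -> alpha <= 1 ->
  bisubmodular alpha f ->
  forall x : 'I_n -> R, (forall i, - alpha <= x i <= 1) ->
  is_convex_closure_value alpha f x (lovasz alpha f x).
Proof.
move=> a0 a1 fb x hx; exact: (@main_res R alpha n x a0 a1 hx f fb).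
Qed.
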